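(* Consider $J$ portfolios; portfolio $j$ consists of a set $\mathcal{I}_j$ of independent accounts with standard deviations $\sigma_i>0$ ($i\in\mathcal{I}_j$) and a dependent block $\mathcal{D}_j$ of $|\mathcal{D}_j|$ accounts whose total has standard deviation $\sigma_{\mathcal{D},j}\ge0$ (with $\sigma_{\mathcal{D},j}\sqrt{|\mathcal{D}_j|}=0$ if $\mathcal{D}_j=\emptyset$). Let $C>0$ be the budget and $V_j>0$ the variance bounds. Put $\gamma_j=\sigma_{\mathcal{D},j}\sqrt{|\mathcal{D}_j|}+\sum_{i\in\mathcal{I}_j}\sigma_i>0$ and $\epsilon_j=\gamma_j/V_j$. For a working set $\mathcal{B}\subsetneq\{1,\dots,J\}$ put $C^{\mathcal{B}}_{\mathrm{Rem}}=C-\sum_{j\in\mathcal{B}}\gamma_j\epsilon_j$, $d^{\mathcal{B}}=\sum_{j\notin\mathcal{B}}\gamma_j$, $\alpha(\mathcal{B})=C^{\mathcal{B}}_{\mathrm{Rem}}/d^{\mathcal{B}}$, and $e_j(\mathcal{B})=\epsilon_j$ if $j\in\mathcal{B}$, $e_j(\mathcal{B})=\alpha(\mathcal{B})$ if $j\notin\mathcal{B}$. The allocation $\mathbf{R}^\ast(\mathcal{B})$ assigns $R_i=\sigma_i e_j(\mathcal{B})$ realisations to $i\in\mathcal{I}_j$ and $r_j=\frac{\sigma_{\mathcal{D},j}}{\sqrt{|\mathcal{D}_j|}}e_j(\mathcal{B})$ to each account of $\mathcal{D}_j$; under it the variance of the estimator of portfolio $j$'s expected collections is $\operatorname{Var}_{\mathcal{B}}(\hat\mu_j)=\sigma^2_{\mathcal{D},j}/r_j+\sum_{i\in\mathcal{I}_j}\sigma_i^2/R_i=\gamma_j/e_j(\mathcal{B})$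 when $e_j(\mathcal{B})>0$, and we set $\operatorname{Var}_{\mathcal{B}}(\hat\mu_j)=+\infty$ if $e_j(\mathcal{B})\le0$ (no budget left). Suppose $\alpha(\mathcal{B})>0$, that at least two indices lie outside $\mathcal{B}$, and that some $j'\notin\mathcal{B}$ has $\operatorname{Var}_{\mathcal{B}}(\hat\mu_{j'})>V_{j'}$. Let $\mathcal{B}^+=\mathcal{B}\cup\{j'\}$. Then for every $j\notin\mathcal{B}^+$, $\operatorname{Var}_{\mathcal{B}^+}(\hat\mu_j)>\operatorname{Var}_{\mathcal{B}}(\hat\mu_j)$.
   Context: This concerns the relaxed allocation problem: choose positive reals $r_j$ (common realisation number for accounts of $\mathcal{D}_j$) and $R_i$ ($i\in\mathcal{I}=\cup_j\mathcal{I}_j$) to minimise $\sum_j\big(\sigma^2_{\mathcal{D},j}/r_j+\sum_{i\in\mathcal{I}_j}\sigma_i^2/R_i\big)$ subject to $\sum_j r_j|\mathcal{D}_j|+\sum_{i\in\mathcal{I}}R_i=C$ and $\sigma^2_{\mathcal{D},j}/r_j+\sum_{i\in\mathcal{I}_j}\sigma_i^2/R_i\le V_j$ for all $j$. $\mathbf{R}^\ast(\mathcal{B})$ is the solution of the stationarity equations of the Lagrangian when the constraints in $\mathcal{B}$ are active (hold with equality) and the others have zero multiplier. *)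

(* Defs.v *)
From HB Require Import structures.
From mathcomp Require Import all_boot all_order all_algebra.
From mathcomp Require Import reals constructive_ereal.
Set Implicit Arguments. Unset Strict Implicit. Unset Printing Implicit Defensive.
Import Order.TTheory GRing.Theory Num.Theory.
Local Open Scope ring_scope.

Section Alloc.
Variables (R : realType) (J : nat).
(* n j = |I_j| (independent accounts), @sig j i = sigma_i for i in I_j,
   m j = |D_j|, sigmaD j = sigma_{D,j}, V j = variance bound, C = budget. *)
Variables (n : 'I_J -> nat) (sig : forall j : 'I_J, 'I_(n j) -> R)
          (m : 'I_J -> nat) (sigmaD : 'I_J -> R) (V : 'I_J -> R) (C : R).

Definition gamma (j : 'I_J) : R :=
  sigmaD j * Num.sqrt ((m j)%:R) + \sum_(i : 'I_(n j)) @sig j i.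

Definition eps (j : 'I_J) : R := gamma j / V j.

Definition Crem (B : {set 'I_J}) : R := C - \sum_(j in B) gamma j * eps j.

Definition dB (B : {set 'I_J}) : R := \sum_(j in ~: B) gamma j.

Definition alpha (B : {set 'I_J}) : R := Crem B / dB B.

Definition e (B : {set 'I_J}) (j : 'I_J) : R :=
  if j \in B then eps j else alpha B.

Definition VarB (B : {set 'I_J}) (j : 'I_J) : \bar R :=
  if 0 < e B j then ((gamma j / e B j)%:E)%E else (+oo)%E.
End Alloc.

(* Main.v *)
Require Import Defs.
From HB Require Import structures.
From mathcomp Require Import all_boot all_order all_algebra.
From mathcomp Require Import reals constructive_ereal.
From mathcomp Require Import ring lra.
Import Order.TTheory GRing.Theory Num.Theory.
Local Open Scope ring_scope.

Theorem lemma5 (R : realType) (J : nat)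
  (n : 'I_J -> nat) (sigma : forall j : 'I_J, 'I_(n j) -> R)
  (m : 'I_J -> nat) (sigmaD : 'I_J -> R) (V : 'I_J -> R) (C : R)
  (Hsigma : forall (j : 'I_J) (i : 'I_(n j)), 0 < sigma j i)
  (HsigmaD : forall j, 0 <= sigmaD j)
  (HC : 0 < C) (HV : forall j, 0 < V j)
  (Hgamma : forall j, 0 < gamma sigma m sigmaD j)
  (B : {set 'I_J}) (j' : 'I_J)
  (Halpha : 0 < alpha sigma m sigmaD V C B)
  (Htwo : (2 <= #|~: B|)%N)
  (Hj' : j' \notin B)
  (Hviol : ((V j')%:E < VarB sigma m sigmaD V C B j')%E) :
  forall j : 'I_J, j \notin j' |: B ->
    (VarB sigma m sigmaD V C B j < VarB sigma m sigmaD V C (j' |: B) j)%E.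
Proof.
move=> j Hj.
set g := gamma sigma m sigmaD.
set a := alpha sigma m sigmaD V C B.
have jB : j \notin B by move: Hj; rewrite in_setU1 negb_or => /andP[].
have jj' : j != j' by move: Hj; rewrite in_setU1 negb_or => /andP[].
have eB : forall k, k \notin B -> e sigma m sigmaD V C B k = a.
  by move=> k kB; rewrite /e (negbTE kB).
have Heps : a < eps sigma m sigmaD V j'.
  move: Hviol; rewrite /VarB eB // Halpha lte_fin /eps => H.
  rewrite ltr_pdivlMr ?HV //; rewrite ltr_pdivlMr // in H; by rewrite mulrC.
have Hd : dB sigma m sigmaD B = g j' + dB sigma m sigmaD (j' |: B).
  rewrite /dB (bigD1 j') /=; last by rewrite in_setC.
  congr (_ + _); apply: eq_bigl => k.
  by rewrite setCU in_setI !in_setC in_set1 andbC.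
have Hd2 : g j <= dB sigma m sigmaD (j' |: B).
  rewrite /dB (bigD1 j) /=; last by rewrite in_setC.
  rewrite lerDl; apply: sumr_ge0 => k _; exact: ltW.
have Hcr : Crem sigma m sigmaD V C (j' |: B) =
    Crem sigma m sigmaD V C B - g j' * eps sigma m sigmaD V j'.
  rewrite /Crem big_setU1 //=; rewrite -/g; ring.
have gpos : 0 < dB sigma m sigmaD (j' |: B) by apply: lt_le_trans Hd2.
have dpos : 0 < dB sigma m sigmaD B by rewrite Hd; apply: addr_gt0.
have Hca : Crem sigma m sigmaD V C B = a * dB sigma m sigmaD B.
  by rewrite /a /alpha divfK // gt_eqF.
have Hlt : alpha sigma m sigmaD V C (j' |: B) < a.
  rewrite /alpha Hcr Hca ltr_pdivrMr // Hd mulrDr.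
  have Hg := Hgamma j'.
  have Hp : 0 < g j' * (eps sigma m sigmaD V j' - a) by apply: mulr_gt0; rewrite // subr_gt0.
  rewrite -/g; lra.
rewrite /VarB eB // Halpha /e (negbTE Hj).
case: ifP => H; last by apply: ltry.
have := @lte_fin R (gamma sigma m sigmaD j / a) (gamma sigma m sigmaD j / alpha sigma m sigmaD V C (j' |: B)).
move=> ->.
rewrite ltr_pM2l ?Hgamma //.
by rewrite ltf_pV2.
Qed.
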